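(* Let $m,n\ge1$, $A,B\in\mathbb{R}_+^{m\times n}$, and suppose $\hat\rho(A,B)<\infty$. Write $t_0=\hat\rho(A,B)$. (1) If $\mathbf{y}\in\mathbb{R}^n_+\setminus\{\mathbf{0}\}$ is weakly optimal, then at least one coordinate of $(A-t_0B)\mathbf{y}$ is zero. (2) Suppose $\mathbf{y}$ is weakly optimal with exactly $\ell$ positive coordinates, and let $A',B'\in\mathbb{R}_+^{m\times\ell}$ be the submatrices of $A,B$ formed by the columns indexed by $\operatorname{supp}\mathbf{y}$. If $\ell\ge m$, then $\operatorname{rank}(A'-t_0B')<m$. (3) Every minimal weakly optimal vector has at most $m$ positive coordinates. (4) If $\mathbf{y}$ is minimal weakly optimal with exactly $m$ positive coordinates, then $\mathbf{y}$ is a weak GPF-eigenvector, i.e. $A\mathbf{y}=t_0B\mathbf{y}$, and $\operatorname{rank}(A'-t_0B')=m-1$, with $A',B'$ as in (2). (5) If $\mathbf{y}'$ is minimal weakly optimal with $\ell<m$ positive coordinates, then there exists a minimal weakly optimal $\mathbf{y}$ with $\operatorname{supp}\mathbf{y}=\operatorname{supp}\mathbf{y}'$ such that the set $\mathcal{K}=\{k\in[m]:(A\mathbf{y})_k=t_0(B\mathbf{y})_k\}$ has $|\mathcal{K}|\ge\ell$.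
   Context: $[m]=\{1,\dots,m\}$. For $A,B\in\mathbb{R}_+^{m\times n}$ (entrywise nonnegative real matrices) and $\mathbf{x}\in\mathbb{R}^n_+\setminus\{\mathbf{0}\}$, set $r(A,B,\mathbf{x})=\max_{i\in[m]}\frac{(A\mathbf{x})_i}{(B\mathbf{x})_i}\in[0,\infty]$ with the conventions $\frac00=0$ and $\frac c0=\infty$ for $c>0$; equivalently $r(A,B,\mathbf{x})=\inf\{t\ge 0: A\mathbf{x}\le tB\mathbf{x}\}$. The weak Collatz–Wielandt quotient is $\hat\rho(A,B)=\inf\{r(A,B,\mathbf{x}):\mathbf{x}\in\mathbb{R}^n_+\setminus\{\mathbf{0}\}\}$. A vector $\mathbf{y}\in\mathbb{R}^n_+\setminus\{\mathbf{0}\}$ is weakly optimal if $r(A,B,\mathbf{y})=\hat\rho(A,B)$; it is minimal weakly optimal if it is weakly optimal and no weakly optimal vector has support strictly contained in $\operatorname{supp}\mathbf{y}=\{j:y_j>0\}$. A weak GPF-eigenvector is $\mathbf{y}\in\mathbb{R}^n_+\setminus\{\mathbf{0}\}$ with $A\mathbf{y}=\hat\rho(A,B)B\mathbf{y}$. *)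

(* Defs.v *)
From HB Require Import structures.
From mathcomp Require Import all_boot all_order all_algebra.
Set Implicit Arguments. Unset Strict Implicit. Unset Printing Implicit Defensive.
Import Order.TTheory GRing.Theory Num.Theory.
Local Open Scope ring_scope.

Section Defs.
Variable R : realFieldType.

Definition nonneg_mx (p q : nat) (M : 'M[R]_(p, q)) : Prop :=
  forall i j, 0 <= M i j.

(* r(A,B,x) with values in [0, oo]; None encodes oo.
   Conventions: 0/0 = 0 (MathComp has c/0 = 0), c/0 = oo for c > 0. *)
Definition ratioAB (m n : nat) (A B : 'M[R]_(m, n)) (x : 'cV[R]_n) : option R :=
  if [exists i, ((B *m x) i 0 == 0) && (0 < (A *m x) i 0)] then None
  else Some (\big[Num.max/0]_(i < m) ((A *m x) i 0 / (B *m x) i 0)).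

(* t is the weak Collatz--Wielandt quotient rho_hat(A,B) and it is finite:
   t is the infimum over x in R^n_+ \ {0} of r(A,B,x) (infinite values are
   never below a finite bound, so only finite values matter). *)
Definition is_rho_hat (m n : nat) (A B : 'M[R]_(m, n)) (t : R) : Prop :=
  (forall x : 'cV[R]_n, nonneg_mx x -> x != 0 ->
     forall s, ratioAB A B x = Some s -> t <= s) /\
  (forall u : R, (forall x : 'cV[R]_n, nonneg_mx x -> x != 0 ->
     forall s, ratioAB A B x = Some s -> u <= s) -> u <= t).

Definition supp (n : nat) (y : 'cV[R]_n) : {set 'I_n} := [set j | 0 < y j 0].

Definition weakly_optimal (m n : nat) (A B : 'M[R]_(m, n)) (t : R)
  (y : 'cV[R]_n) : Prop :=
  nonneg_mx y /\ y != 0 /\ ratioAB A B y = Some t.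

Definition min_weakly_optimal (m n : nat) (A B : 'M[R]_(m, n)) (t : R)
  (y : 'cV[R]_n) : Prop :=
  weakly_optimal A B t y /\
  (forall z, weakly_optimal A B t z -> ~ (supp z \proper supp y)).

Definition colsub_set (m n : nat) (M : 'M[R]_(m, n)) (S : {set 'I_n})
  : 'M[R]_(m, #|S|) :=
  colsub (fun k : 'I_#|S| => enum_val k) M.

End Defs.

(* Main.v *)
Require Import Defs.
From HB Require Import structures.
From mathcomp Require Import all_boot all_order all_algebra.
Import Order.TTheory GRing.Theory Num.Theory.
Local Open Scope ring_scope.
Set Implicit Arguments. Unset Strict Implicit.

Lemma mulmx_ge0 (R : realFieldType) (m n : nat) (A : 'M[R]_(m, n)) (x : 'cV[R]_n) i :
  nonneg_mx A -> nonneg_mx x -> 0 <= (A *m x) i 0.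
Proof. by move=> HA Hx; rewrite mxE sumr_ge0 // => j _; rewrite mulr_ge0. Qed.

Lemma MentE (R : realFieldType) (m n : nat) (A B : 'M[R]_(m, n)) (t0 : R) (x : 'cV[R]_n) i :
  ((A - t0 *: B) *m x) i 0 = (A *m x) i 0 - t0 * (B *m x) i 0.
Proof. by rewrite mulmxBl -scalemxAl !mxE. Qed.

Lemma ratioP (R : realFieldType) (m n : nat) (A B : 'M[R]_(m, n)) x s :
  ratioAB A B x = Some s ->
  (forall i, (B *m x) i 0 = 0 -> (A *m x) i 0 <= 0) /\
  s = \big[Num.max/0]_(i < m) ((A *m x) i 0 / (B *m x) i 0).
Proof.
rewrite /ratioAB; case: ifP => // /negbT; rewrite negb_exists => /forallP H [<-].
split=> // i Bi; have := H i; by rewrite Bi eqxx /= leNgt.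
Qed.

Lemma ratioE (R : realFieldType) (m n : nat) (A B : 'M[R]_(m, n)) x :
  (forall i, (B *m x) i 0 = 0 -> (A *m x) i 0 <= 0) ->
  ratioAB A B x = Some (\big[Num.max/0]_(i < m) ((A *m x) i 0 / (B *m x) i 0)).
Proof.
move=> H; rewrite /ratioAB ifF //; apply/negbTE; rewrite negb_exists; apply/forallP=> i.
by apply/negP=> /andP [/eqP /H]; rewrite leNgt => /negP.
Qed.

Lemma bigmax_ge0 (R : realFieldType) (m : nat) (F : 'I_m -> R) :
  0 <= \big[Num.max/0]_(i < m) F i.
Proof. by rewrite leNgt; apply/negP => /bigmax_ltP []; rewrite ltxx. Qed.

Lemma t0_ge0 (R : realFieldType) (m n : nat) (A B : 'M[R]_(m, n)) t0 :
  is_rho_hat A B t0 -> 0 <= t0.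
Proof.
case=> _ H; apply: H => x _ _ s /ratioP [_ ->]; exact: bigmax_ge0.
Qed.

Lemma F1 (R : realFieldType) (m n : nat) (A B : 'M[R]_(m, n)) t0 (y : 'cV[R]_n) i :
  nonneg_mx B -> weakly_optimal A B t0 y -> ((A - t0 *: B) *m y) i 0 <= 0.
Proof.
move=> HB [Hy [_ /ratioP [H1 Ht]]]; rewrite MentE.
have [/eqP Bi|Bi] := boolP ((B *m y) i 0 == 0).
  by rewrite Bi mulr0 subr0 H1.
have Bp : 0 < (B *m y) i 0 by rewrite lt_def Bi mulmx_ge0.
rewrite subr_le0 -ler_pdivrMr // Ht.
by rewrite (le_bigmax _ (fun i : 'I_m => (A *m y) i 0 / (B *m y) i 0)).
Qed.

Lemma F2 (R : realFieldType) (m n : nat) (A B : 'M[R]_(m, n)) t0 (z : 'cV[R]_n) :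
  nonneg_mx B -> is_rho_hat A B t0 -> nonneg_mx z -> z != 0 ->
  (forall i, ((A - t0 *: B) *m z) i 0 <= 0) -> weakly_optimal A B t0 z.
Proof.
move=> HB Hr Hz z0 HM; split=> //; split=> //.
have H1 : forall i, (B *m z) i 0 = 0 -> (A *m z) i 0 <= 0.
  by move=> i Bi; have := HM i; rewrite MentE Bi mulr0 subr0.
rewrite (ratioE H1); congr Some; apply/le_anti/andP; split; last first.
  by apply: (proj1 Hr z Hz z0); rewrite (ratioE H1).
apply/bigmax_leP; split; first exact: t0_ge0 Hr.
move=> i _.
have [/eqP Bi|Bi] := boolP ((B *m z) i 0 == 0).
  by rewrite Bi invr0 mulr0 (t0_ge0 Hr).
have Bp : 0 < (B *m z) i 0 by rewrite lt_def Bi mulmx_ge0.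
by rewrite ler_pdivrMr // -subr_le0 -MentE.
Qed.

Lemma F3 (R : realFieldType) (m n : nat) (A B : 'M[R]_(m, n)) t0 (z : 'cV[R]_n) :
  (0 < m)%N -> nonneg_mx A -> nonneg_mx B -> is_rho_hat A B t0 -> nonneg_mx z -> z != 0 ->
  (forall i, ((A - t0 *: B) *m z) i 0 < 0) -> False.
Proof.
move=> m0 HA HB Hr Hz z0 HM.
have t0p := t0_ge0 Hr.
have Bp : forall i, 0 < (B *m z) i 0.
  move=> i; have := HM i; rewrite MentE subr_lt0 => H.
  have Ap := mulmx_ge0 i HA Hz.
  rewrite lt_def (mulmx_ge0 i HB Hz) andbT; apply/eqP=> Bi.
  by move: H; rewrite Bi mulr0 ltNge Ap.
have t0q : 0 < t0.
  have := HM (Ordinal m0); rewrite MentE subr_lt0 => H.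
  have Ap := mulmx_ge0 (Ordinal m0) HA Hz.
  rewrite lt_def t0p andbT; apply/eqP=> t00.
  by move: H; rewrite t00 mul0r ltNge Ap.
have H1 : forall i, (B *m z) i 0 = 0 -> (A *m z) i 0 <= 0.
  by move=> i Bi; have := Bp i; rewrite Bi ltxx.
have := proj1 Hr z Hz z0 _ (ratioE H1).
apply/negP; rewrite -ltNge; apply/bigmax_ltP; split => // i _.
by rewrite ltr_pdivrMr // -subr_lt0 -MentE.
Qed.
Lemma GL (R : realFieldType) (I : finType) (a b : I -> R) :
  (forall i, 0 <= a i) -> (forall i, a i = 0 -> 0 <= b i) -> (exists i, b i < 0) ->
  exists s, 0 < s /\ (forall i, 0 <= a i + s * b i) /\
    (exists i, a i != 0 /\ a i + s * b i = 0).
Proof.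
move=> a0 ab [i1 bi1].
case: (@arg_minP _ R I i1 (fun i => b i < 0) (fun i => a i / - b i) bi1).
move=> i0 bi0 Hmin.
have ai0 : a i0 != 0 by apply/eqP=> /ab; rewrite leNgt bi0.
have ai0p : 0 < a i0 by rewrite lt_def ai0 a0.
exists (a i0 / - b i0); split; first by rewrite divr_gt0 // oppr_gt0.
split.
  move=> i; case: (ltP (b i) 0) => bi.
    have H := Hmin i bi; rewrite ler_pdivlMr ?oppr_gt0 // mulrN in H.
    by rewrite -(opprK (_ * b i)) subr_ge0.
  by rewrite addr_ge0 // mulr_ge0 // divr_ge0 // ?oppr_ge0 ?a0 // ltW.
exists i0; split => //.
by rewrite invrN mulrN mulNr -mulrA mulVf ?mulr1 ?subrr // lt_eqF.
Qed.

Lemma GL2 (R : realFieldType) (I : finType) (a b : I -> R) :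
  (forall i, 0 <= a i) ->
  exists s, 0 < s /\ (forall i, 0 < a i -> 0 < a i + s * b i).
Proof.
move=> a0.
case: (boolP [exists i, (0 < a i) && (b i < 0)]) => [/existsP [i1 Hi1]|].
  case: (@arg_minP _ R I i1 (fun i => (0 < a i) && (b i < 0)) (fun i => a i / - b i) Hi1).
  move=> i0 /andP [ai0 bi0] Hmin.
  have s0 : 0 < a i0 / - b i0 by rewrite divr_gt0 // oppr_gt0.
  exists (a i0 / - b i0 / 2); split; first by rewrite divr_gt0.
  move=> i ai; case: (ltP (b i) 0) => bi.
    have H := Hmin i (introT andP (conj ai bi)).
    rewrite ler_pdivlMr ?oppr_gt0 // in H.
    have H2 : a i0 / - b i0 / 2 * - b i < a i.
      apply: lt_le_trans H; rewrite ltr_pM2r ?oppr_gt0 //.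
      by rewrite ltr_pdivrMr // ltr_pMr // ltr1n.
    by rewrite mulrN in H2; rewrite -(opprK (_ * b i)) subr_gt0.
  by rewrite ltr_wpDr // mulr_ge0 // ltW // divr_gt0.
rewrite negb_exists => /forallP H.
exists 1; split => // i ai.
have := H i; rewrite ai /= -leNgt => bi.
by rewrite mul1r ltr_wpDr.
Qed.

Lemma pos_exists (R : realFieldType) (n : nat) (y : 'cV[R]_n) :
  nonneg_mx y -> y != 0 -> exists j, 0 < y j 0.
Proof.
move=> Hy /matrix0Pn [j [i Hji]]; exists j; rewrite (ord1 i) in Hji.
by rewrite lt_def Hji Hy.
Qed.

Lemma oppE (R : realFieldType) (p q : nat) (X : 'M[R]_(p, q)) i j : (- X) i j = - X i j.
Proof. by rewrite mxE. Qed.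

Lemma zeroE (R : realFieldType) (p q : nat) i j : (0 : 'M[R]_(p, q)) i j = 0.
Proof. by rewrite mxE. Qed.

Lemma zE (R : realFieldType) (n : nat) (y w : 'cV[R]_n) s j :
  (y + s *: w) j 0 = y j 0 + s * w j 0.
Proof. by rewrite !mxE. Qed.

Lemma MzE (R : realFieldType) (m n : nat) (M : 'M[R]_(m, n)) (y w : 'cV[R]_n) s i :
  (M *m (y + s *: w)) i 0 = (M *m y) i 0 + s * (M *m w) i 0.
Proof. by rewrite mulmxDr -scalemxAr !mxE. Qed.

Definition aF (R : realFieldType) (m n : nat) (M : 'M[R]_(m, n)) (y : 'cV[R]_n)
  (k : ('I_n + 'I_m)%type) : R :=
  match k with inl j => y j 0 | inr i => - (M *m y) i 0 end.

Lemma PL (R : realFieldType) (m n : nat) (A B : 'M[R]_(m, n)) t0 (y w : 'cV[R]_n) :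
  (0 < m)%N -> nonneg_mx A -> nonneg_mx B -> is_rho_hat A B t0 ->
  weakly_optimal A B t0 y ->
  (forall j, y j 0 = 0 -> w j 0 = 0) ->
  (forall i, ((A - t0 *: B) *m y) i 0 = 0 -> ((A - t0 *: B) *m w) i 0 < 0) -> False.
Proof.
move=> m0 HA HB Hr Hwo Hw1 Hw2.
have [Hy [y0 _]] := Hwo.
have a0 : forall k, 0 <= aF (A - t0 *: B) y k.
  by case=> [j|i] /=; [exact: Hy | rewrite oppr_ge0 (F1 _ HB Hwo)].
have [s [s0 Hs]] := GL2 (aF (A - t0 *: B) w) a0.
apply: (F3 (z := y + s *: w) m0 HA HB Hr).
- move=> j i; rewrite (ord1 i) zE.
  case: (ltP 0 (y j 0)) => yj; first by apply: ltW; exact: (Hs (inl j) yj).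
  have y0' : y j 0 = 0 by apply/le_anti; rewrite yj Hy.
  by rewrite y0' (Hw1 _ y0') mulr0 addr0.
- have [j yj] := pos_exists Hy y0.
  apply/matrix0Pn; exists j, 0; rewrite zE gt_eqF //; exact: (Hs (inl j) yj).
- move=> i; rewrite MzE.
  have := F1 i HB Hwo; rewrite le_eqVlt => /orP [/eqP My0|Myn].
    by rewrite My0 add0r pmulr_rlt0 // Hw2.
  have := Hs (inr i); rewrite /= oppr_gt0 => /(_ Myn).
  by rewrite mulrN -opprD oppr_gt0.
Qed.

Lemma ML (R : realFieldType) (m n : nat) (A B : 'M[R]_(m, n)) t0 (y w : 'cV[R]_n) :
  nonneg_mx B -> is_rho_hat A B t0 ->
  weakly_optimal A B t0 y ->
  (forall j, y j 0 = 0 -> w j 0 = 0) ->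
  (forall c, w != c *: y) ->
  (forall i, ((A - t0 *: B) *m y) i 0 = 0 -> ((A - t0 *: B) *m w) i 0 = 0) ->
  exists z, weakly_optimal A B t0 z /\ supp z \subset supp y /\
    (forall i, ((A - t0 *: B) *m y) i 0 = 0 -> ((A - t0 *: B) *m z) i 0 = 0) /\
    (supp z != supp y \/ exists i, ((A - t0 *: B) *m y) i 0 != 0 /\
                                   ((A - t0 *: B) *m z) i 0 = 0) /\
    ((A - t0 *: B) *m w = 0 -> (A - t0 *: B) *m z = (A - t0 *: B) *m y).
Proof.
move=> HB Hr Hwo.
have [Hy [y0 Hyr]] := Hwo.
wlog: w / exists j, w j 0 < 0.
  move=> Hwlog Hw1 Hw2 Hw3.
  case: (boolP [exists j, w j 0 < 0]) => [/existsP|]; first by move=> ?; apply: Hwlog.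
  rewrite negb_exists => /forallP Hn.
  have [z [Z1 [Z2 [Z3 [Z4 Z5]]]]] : exists z, weakly_optimal A B t0 z /\ supp z \subset supp y /\
    (forall i, ((A - t0 *: B) *m y) i 0 = 0 -> ((A - t0 *: B) *m z) i 0 = 0) /\
    (supp z != supp y \/ exists i, ((A - t0 *: B) *m y) i 0 != 0 /\
                                   ((A - t0 *: B) *m z) i 0 = 0) /\
    ((A - t0 *: B) *m - w = 0 -> (A - t0 *: B) *m z = (A - t0 *: B) *m y).
    apply: Hwlog.
    - have : w != 0 by have := Hw2 0; rewrite scale0r.
      case/matrix0Pn => j [i]; rewrite (ord1 i) => wj.
      exists j; rewrite mxE oppr_lt0 lt_def wj /=.
      by have := Hn j; rewrite -leNgt.
    - by move=> j /Hw1; rewrite mxE => ->; rewrite oppr0.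
    - move=> c; apply/negP => /eqP E; have := Hw2 (- c).
      by rewrite scaleNr -E opprK eqxx.
    - by move=> i /Hw3 H; rewrite mulmxN oppE H oppr0.
  exists z; do 4!(split => //).
  by move=> Mw0; apply: Z5; rewrite mulmxN Mw0 oppr0.
case=> j1 wj1 Hw1 Hw2 Hw3.
set M := A - t0 *: B.
have a0 : forall k, 0 <= aF M y k.
  by case=> [j|i] /=; [exact: Hy | rewrite oppr_ge0 (F1 _ HB Hwo)].
have ab : forall k, aF M y k = 0 -> 0 <= aF M w k.
  case=> [j|i] /= H; first by rewrite (Hw1 _ H).
  by move/eqP: H; rewrite oppr_eq0 => /eqP /Hw3 ->; rewrite oppr0.
have [s [s0 [Hs [k0 [ak0 Hk0]]]]] := GL a0 ab (ex_intro _ (inl j1) wj1).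
exists (y + s *: w).
have zy : supp (y + s *: w) \subset supp y.
  apply/subsetP => j; rewrite !inE zE => zj.
  case: (ltP 0 (y j 0)) => // yj.
  have y0' : y j 0 = 0 by apply/le_anti; rewrite yj Hy.
  by move: zj; rewrite y0' (Hw1 _ y0') mulr0 addr0 ltxx.
split.
  apply: F2 => //.
  - by move=> j i; rewrite (ord1 i) zE; exact: (Hs (inl j)).
  - apply/eqP => z0; apply: (elimN eqP (Hw2 (- s^-1))).
    apply/matrixP => i j; rewrite (ord1 j) mxE.
    have := congr1 (fun N : 'cV[R]_n => N i 0) z0; rewrite zE mxE => /eqP.
    rewrite addr_eq0 => /eqP ->.
    by rewrite mulNr mulrN opprK mulrA mulVf ?mul1r // gt_eqF.
  - move=> i; rewrite MzE; have := Hs (inr i); rewrite /=.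
    by rewrite mulrN -opprD oppr_ge0.
split => //.
split; first by move=> i My0; rewrite MzE My0 (Hw3 _ My0) mulr0 addr0.
split; last by move=> Mw0; apply/matrixP => i j; rewrite (ord1 j) MzE Mw0 zeroE mulr0 addr0.
case: k0 ak0 Hk0 => [j|i] /= ak0 Hk0.
  left; apply/eqP => E.
  have : j \in supp (y + s *: w) by rewrite E inE lt_def ak0 Hy.
  by rewrite inE zE Hk0 ltxx.
right; exists i; split; first by rewrite oppr_eq0 in ak0.
by move/eqP: Hk0; rewrite MzE mulrN -opprD oppr_eq0 => /eqP.
Qed.

Definition Pm (R : realFieldType) (n : nat) (S : {set 'I_n}) : 'M[R]_(n, #|S|) :=
  colsub (fun k : 'I_#|S| => enum_val k) (1%:M : 'M[R]_n).

Lemma colsubP (R : realFieldType) (m n : nat) (X : 'M[R]_(m, n)) S :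
  colsub_set X S = X *m Pm R S.
Proof. by rewrite /Pm mulmx_colsub mulmx1. Qed.

Lemma MPE (R : realFieldType) (m n : nat) (A B : 'M[R]_(m, n)) t0 S :
  colsub_set A S - t0 *: colsub_set B S = (A - t0 *: B) *m Pm R S.
Proof. by rewrite !colsubP mulmxBl scalemxAl. Qed.

Lemma PtP (R : realFieldType) (n : nat) (S : {set 'I_n}) :
  (Pm R S)^T *m Pm R S = 1%:M.
Proof.
rewrite {2}/Pm mulmx_colsub mulmx1; apply/matrixP => k k'.
by rewrite !mxE (inj_eq enum_val_inj) eq_sym.
Qed.

Lemma Psupp (R : realFieldType) (n : nat) (S : {set 'I_n}) (d : 'cV[R]_#|S|) j :
  j \notin S -> (Pm R S *m d) j 0 = 0.
Proof.
move=> jS; rewrite mxE big1 // => k _; rewrite !mxE.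
have -> : (j == enum_val k) = false.
  by apply/negbTE; apply: contra jS => /eqP ->; exact: enum_valP.
by rewrite mul0r.
Qed.

Lemma Psupp_y (R : realFieldType) (n : nat) (y : 'cV[R]_n) (d : 'cV[R]_#|supp y|) j :
  y j 0 = 0 -> (Pm R (supp y) *m d) j 0 = 0.
Proof. by move=> y0; apply: Psupp; rewrite inE y0 ltxx. Qed.

Lemma notmult (R : realFieldType) (n : nat) (y : 'cV[R]_n) (d : 'cV[R]_#|supp y|) :
  ~~ (d^T <= ((Pm R (supp y))^T *m y)^T)%MS -> forall c, Pm R (supp y) *m d != c *: y.
Proof.
move=> H c; apply/negP => /eqP E; apply: (negP H).
have -> : d = c *: ((Pm R (supp y))^T *m y) by rewrite scalemxAr -E mulmxA PtP mul1mx.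
by rewrite linearZ /= scalemx_sub.
Qed.

Lemma kersel1 (R : realFieldType) (p l : nat) (N : 'M[R]_(p, l)) (v : 'cV[R]_l) :
  ((\rank N).+2 <= l)%N -> exists d : 'cV[R]_l, N *m d = 0 /\ ~~ (d^T <= v^T)%MS.
Proof.
move=> Hr.
have rK : \rank (kermx N^T) = (l - \rank N)%N by rewrite mxrank_ker mxrank_tr.
case: (boolP [exists r, ~~ (row r (kermx N^T) <= v^T)%MS]) => [/existsP [r Hr2]|].
  exists (row r (kermx N^T))^T; split; last by rewrite trmxK.
  apply: trmx_inj; rewrite trmx_mul trmxK -row_mul mulmx_ker.
  by apply/matrixP => i j; rewrite !mxE.
rewrite negb_exists => /forallP H.
have : (kermx N^T <= v^T)%MS by apply/row_subP => r; have := H r; rewrite negbK.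
move/mxrankS; rewrite rK => H2.
have := leq_trans H2 (rank_leq_row v^T).
rewrite leq_subLR => H3.
by have := leq_trans Hr H3; rewrite addn1 ltnn.
Qed.

Lemma kersel2 (R : realFieldType) (p l : nat) (N : 'M[R]_(p, l)) :
  (\rank N < l)%N -> exists d : 'cV[R]_l, N *m d = 0 /\ d != 0.
Proof.
move=> Hr.
have rK : \rank (kermx N^T) = (l - \rank N)%N by rewrite mxrank_ker mxrank_tr.
have : kermx N^T != 0.
  by rewrite -mxrank_eq0 rK subn_eq0 -ltnNge.
case/matrix0Pn => r [j Hrj].
exists (row r (kermx N^T))^T; split.
  apply: trmx_inj; rewrite trmx_mul trmxK -row_mul mulmx_ker.
  by apply/matrixP => i k; rewrite !mxE.
apply/matrix0Pn; exists j; exists 0; rewrite mxE mxE; exact: Hrj.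
Qed.

Lemma surj (R : realFieldType) (p l : nat) (N : 'M[R]_(p, l)) :
  \rank N = p -> forall v : 'cV[R]_p, exists d, N *m d = v.
Proof.
move=> Hr v.
have : row_full N^T by rewrite /row_full mxrank_tr Hr.
case/row_fullP => E HE.
exists (E^T *m v); rewrite mulmxA.
have -> : N *m E^T = 1%:M by rewrite -[N]trmxK -trmx_mul HE trmx1.
by rewrite mul1mx.
Qed.

Definition Kset (R : realFieldType) (m n : nat) (A B : 'M[R]_(m, n)) (t0 : R) (y : 'cV[R]_n) :=
  [set k : 'I_m | ((A *m y) k 0 == t0 * (B *m y) k 0)%R].

Lemma KsetE (R : realFieldType) (m n : nat) (A B : 'M[R]_(m, n)) t0 (y : 'cV[R]_n) k :
  (k \in Kset A B t0 y) = (((A - t0 *: B) *m y) k 0 == 0).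
Proof. by rewrite inE MentE subr_eq0. Qed.

Lemma part1 (R : realFieldType) (m n : nat) (A B : 'M[R]_(m, n)) t0 (y : 'cV[R]_n) :
  (0 < m)%N -> nonneg_mx A -> nonneg_mx B -> is_rho_hat A B t0 ->
  weakly_optimal A B t0 y -> exists i : 'I_m, ((A - t0 *: B) *m y) i 0 = 0.
Proof.
move=> m0 HA HB Hr Hwo.
case: (boolP [exists i, ((A - t0 *: B) *m y) i 0 == 0]) => [/existsP [i /eqP Hi]|]; first by exists i.
rewrite negb_exists => /forallP H; exfalso.
have [Hy [y0 _]] := Hwo.
apply: (F3 m0 HA HB Hr Hy y0) => i.
by rewrite lt_def eq_sym H (F1 i HB Hwo).
Qed.

Lemma part2 (R : realFieldType) (m n : nat) (A B : 'M[R]_(m, n)) t0 (y : 'cV[R]_n) :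
  (0 < m)%N -> nonneg_mx A -> nonneg_mx B -> is_rho_hat A B t0 ->
  weakly_optimal A B t0 y ->
  (\rank (colsub_set A (supp y) - t0 *: colsub_set B (supp y))%R < m)%N.
Proof.
move=> m0 HA HB Hr Hwo; rewrite MPE ltn_neqAle rank_leq_row andbT.
apply/eqP => Hrank.
have [d Hd] := surj Hrank (const_mx (-1)).
apply: (PL (w := Pm R (supp y) *m d) m0 HA HB Hr Hwo).
- by move=> j; apply: Psupp_y.
- by move=> i _; rewrite mulmxA Hd mxE oppr_lt0 ltr01.
Qed.

Lemma no_ker (R : realFieldType) (m n : nat) (A B : 'M[R]_(m, n)) t0 (y : 'cV[R]_n)
  (d : 'cV[R]_#|supp y|) :
  nonneg_mx B -> is_rho_hat A B t0 -> min_weakly_optimal A B t0 y ->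
  ((A - t0 *: B) *m Pm R (supp y)) *m d = 0 ->
  (forall c, Pm R (supp y) *m d != c *: y) -> False.
Proof.
move=> HB Hr [Hwo Hmin] Hd Hnm.
have Mw0 : (A - t0 *: B) *m (Pm R (supp y) *m d) = 0 by rewrite mulmxA Hd.
have [z [Z1 [Z2 [_ [Z4 Z5]]]]] := ML HB Hr Hwo (fun j => @Psupp_y R n y d j) Hnm
  (fun i _ => etrans (congr1 (fun N : 'cV[R]_m => N i 0) Mw0) (zeroE _ _ _)).
case: Z4 => [Z4|[i [Hi Hzi]]].
  by apply: (Hmin z Z1); rewrite properEneq Z4 Z2.
by move: Hi; rewrite -Hzi (Z5 Mw0) eqxx.
Qed.

Lemma part3 (R : realFieldType) (m n : nat) (A B : 'M[R]_(m, n)) t0 (y : 'cV[R]_n) :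
  (0 < m)%N -> nonneg_mx A -> nonneg_mx B -> is_rho_hat A B t0 ->
  min_weakly_optimal A B t0 y -> (#|supp y| <= m)%N.
Proof.
move=> m0 HA HB Hr Hmw; rewrite leqNgt; apply/negP => Hl.
have := part2 m0 HA HB Hr (proj1 Hmw); rewrite MPE => Hrk.
have H2 : ((\rank ((A - t0 *: B) *m Pm R (supp y))).+2 <= #|supp y|)%N.
  by apply: leq_trans Hl.
have [d [Hd Hn]] := kersel1 ((Pm R (supp y))^T *m y) H2.
exact: (no_ker HB Hr Hmw Hd (notmult Hn)).
Qed.

Lemma part4 (R : realFieldType) (m n : nat) (A B : 'M[R]_(m, n)) t0 (y : 'cV[R]_n) :
  (0 < m)%N -> nonneg_mx A -> nonneg_mx B -> is_rho_hat A B t0 ->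
  min_weakly_optimal A B t0 y -> #|supp y| = m ->
  A *m y = t0 *: (B *m y) /\
  \rank (colsub_set A (supp y) - t0 *: colsub_set B (supp y)) = m.-1.
Proof.
move=> m0 HA HB Hr Hmw Hl.
have Hrk := part2 m0 HA HB Hr (proj1 Hmw); rewrite MPE in Hrk *.
split.
  apply/eqP; rewrite -subr_eq0 scalemxAl -mulmxBl; apply/negPn/negP => My0.
  have Hrk' : (\rank ((A - t0 *: B) *m Pm R (supp y)) < #|supp y|)%N.
    by apply: leq_trans Hrk _; rewrite Hl.
  have [d [Hd d0]] := kersel2 Hrk'.
  apply: (no_ker HB Hr Hmw Hd) => c; apply/negP => /eqP E.
  have : c *: ((A - t0 *: B) *m y) = 0 by rewrite scalemxAr -E mulmxA Hd.
  move/eqP; rewrite scalemx_eq0 (negbTE My0) orbF => /eqP c0.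
  move: E; rewrite c0 scale0r => E.
  move/negP: d0; apply; apply/eqP.
  by rewrite -[d]mul1mx -(PtP R (supp y)) -mulmxA E mulmx0.
have H2 : ~ ((\rank ((A - t0 *: B) *m Pm R (supp y))).+2 <= #|supp y|)%N.
  move=> H2; have [d [Hd Hn]] := kersel1 ((Pm R (supp y))^T *m y) H2.
  exact: (no_ker HB Hr Hmw Hd (notmult Hn)).
have H3 : ~ ((\rank ((A - t0 *: B) *m Pm R (supp y))).+2 <= m)%N.
  by move=> H; apply: H2; apply: leq_trans H _; rewrite Hl.
move: (\rank _) Hrk H3 => r.
case: m {A B Hmw Hl m0 HA HB Hr H2} => // m.
move=> H1 H2 /=; apply/eqP; rewrite eqn_leq -ltnS H1 /=.
by rewrite leqNgt; apply/negP => H3; apply: H2.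
Qed.

Lemma rowsub_ent (R : realFieldType) (p p' q : nat) (f : 'I_p' -> 'I_p) (X : 'M[R]_(p, q)) k j :
  rowsub f X k j = X (f k) j.
Proof. by rewrite mxE. Qed.

Lemma improve (R : realFieldType) (m n : nat) (A B : 'M[R]_(m, n)) t0 (y' y : 'cV[R]_n) :
  (0 < m)%N -> nonneg_mx A -> nonneg_mx B -> is_rho_hat A B t0 ->
  min_weakly_optimal A B t0 y' -> weakly_optimal A B t0 y -> supp y = supp y' ->
  (#|Kset A B t0 y| < #|supp y|)%N ->
  exists z, weakly_optimal A B t0 z /\ supp z = supp y' /\
    (#|Kset A B t0 y| < #|Kset A B t0 z|)%N.
Proof.
move=> m0 HA HB Hr [_ Hmin] Hwo Hs HK.
set K := Kset A B t0 y.
set MP := (A - t0 *: B) *m Pm R (supp y).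
set N := rowsub (fun k : 'I_#|K| => enum_val k) MP.
have NE : forall (d : 'cV[R]_#|supp y|) i (Ki : i \in K),
    ((A - t0 *: B) *m (Pm R (supp y) *m d)) i 0 = (N *m d) (enum_rank_in Ki i) 0.
  move=> d i Ki; rewrite /N mul_rowsub_mx rowsub_ent enum_rankK_in //.
  by rewrite mulmxA.
have HN : (\rank N < #|K|)%N.
  rewrite ltn_neqAle rank_leq_row andbT; apply/eqP => HN.
  have [d Hd] := surj HN (const_mx (-1)).
  apply: (PL (w := Pm R (supp y) *m d) m0 HA HB Hr Hwo).
  - by move=> j; apply: Psupp_y.
  - move=> i /eqP; rewrite -KsetE => Ki.
    by rewrite (NE d i Ki) Hd mxE oppr_lt0 ltr01.
have H2 : ((\rank N).+2 <= #|supp y|)%N by apply: leq_trans HK.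
have [d [Hd Hn]] := kersel1 ((Pm R (supp y))^T *m y) H2.
have Hrows : forall i, ((A - t0 *: B) *m y) i 0 = 0 ->
    ((A - t0 *: B) *m (Pm R (supp y) *m d)) i 0 = 0.
  move=> i /eqP; rewrite -KsetE => Ki.
  by rewrite (NE d i Ki) Hd zeroE.
have [z [Z1 [Z2 [Z3 [Z4 _]]]]] := ML HB Hr Hwo (fun j => @Psupp_y R n y d j) (notmult Hn) Hrows.
case: (eqVneq (supp z) (supp y)) => E; last first.
  by exfalso; apply: (Hmin z Z1); rewrite -Hs properEneq E Z2.
case: Z4 => [|[i [Hi Hzi]]]; first by rewrite E eqxx.
exists z; split => //; split; first by rewrite E.
apply: proper_card; apply/properP; split.
  by apply/subsetP => k; rewrite !KsetE => /eqP /Z3 ->.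
by exists i; rewrite KsetE ?Hzi ?Hi.
Qed.

Lemma iter5 (R : realFieldType) (m n : nat) (A B : 'M[R]_(m, n)) t0 (y' : 'cV[R]_n) :
  (0 < m)%N -> nonneg_mx A -> nonneg_mx B -> is_rho_hat A B t0 ->
  min_weakly_optimal A B t0 y' -> forall k (y : 'cV[R]_n),
  weakly_optimal A B t0 y -> supp y = supp y' ->
  (#|supp y'| - #|Kset A B t0 y| <= k)%N ->
  exists z, weakly_optimal A B t0 z /\ supp z = supp y' /\
    (#|supp y'| <= #|Kset A B t0 z|)%N.
Proof.
move=> m0 HA HB Hr Hmw; elim => [|k IH] y Hy Hs Hk;
  (case: (leqP #|supp y'| #|Kset A B t0 y|) => Hl; first by exists y).
  by move: Hk; rewrite leqn0 subn_eq0 leqNgt Hl.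
have HK : (#|Kset A B t0 y| < #|supp y|)%N by rewrite Hs.
have [z [Z1 [Z2 Z3]]] := improve m0 HA HB Hr Hmw Hy Hs HK.
apply: (IH z Z1 Z2).
rewrite leq_subLR; rewrite leq_subLR in Hk.
apply: leq_trans Hk _; by rewrite addnS -addSn leq_add2r.
Qed.

Lemma part5 (R : realFieldType) (m n : nat) (A B : 'M[R]_(m, n)) t0 (y' : 'cV[R]_n) :
  (0 < m)%N -> nonneg_mx A -> nonneg_mx B -> is_rho_hat A B t0 ->
  min_weakly_optimal A B t0 y' ->
  exists y : 'cV[R]_n, min_weakly_optimal A B t0 y /\ supp y = supp y' /\
       (#|supp y'| <= #|[set k : 'I_m | ((A *m y) k 0 == t0 * (B *m y) k 0)%R]|)%N.
Proof.
move=> m0 HA HB Hr Hmw.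
have [z [Z1 [Z2 Z3]]] := iter5 m0 HA HB Hr Hmw (proj1 Hmw) erefl (leqnn _).
exists z; split; last by split.
split => // z' Hz'; rewrite Z2; exact: (proj2 Hmw z' Hz').
Qed.

Unset Implicit Arguments.

Theorem theorem5p1 (R : realFieldType) (m n : nat) (A B : 'M[R]_(m, n)) (t0 : R) :
  (0 < m)%N -> (0 < n)%N ->
  nonneg_mx A -> nonneg_mx B ->
  is_rho_hat A B t0 ->
  (* (1) *)
  (forall y : 'cV[R]_n, weakly_optimal A B t0 y ->
     exists i : 'I_m, ((A - t0 *: B) *m y) i 0 = 0) /\
  (* (2) *)
  (forall y : 'cV[R]_n, weakly_optimal A B t0 y ->
     (m <= #|supp y|)%N ->
     (\rank (colsub_set A (supp y) - t0 *: colsub_set B (supp y))%R < m)%N) /\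
  (* (3) *)
  (forall y : 'cV[R]_n, min_weakly_optimal A B t0 y -> (#|supp y| <= m)%N) /\
  (* (4) *)
  (forall y : 'cV[R]_n, min_weakly_optimal A B t0 y -> #|supp y| = m ->
     A *m y = t0 *: (B *m y) /\
     \rank (colsub_set A (supp y) - t0 *: colsub_set B (supp y))%R = m.-1) /\
  (* (5) *)
  (forall y' : 'cV[R]_n, min_weakly_optimal A B t0 y' -> (#|supp y'| < m)%N ->
     exists y : 'cV[R]_n, min_weakly_optimal A B t0 y /\ supp y = supp y' /\
       (#|supp y'| <= #|[set k : 'I_m | ((A *m y) k 0 == t0 * (B *m y) k 0)%R]|)%N).
Proof.
move=> m0 _ HA HB Hr.
split; first by move=> y; exact: part1.
split; first by move=> y Hy _; exact: part2.
split; first by move=> y; exact: part3.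
split; first by move=> y; exact: part4.
by move=> y' Hy' _; exact: part5.
Qed.
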